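(* For any $k$ and $d$, there exists $m=O(k^2\log k)$ such that for any $d$-dimensional $k$-Fourier-sparse signal $x(t)$, any $t_0\in\mathbb{R}^d_{\ge0}$ and any $\tau\in\mathbb{R}^d_{>0}$, there exist $C_1,\dots,C_m\in\mathbb{C}$ such that $|C_j|\le 11$ for all $j\in[m]$ and $$x(t_0)=\sum_{j\in[m]}C_j\,x(t_0+j\tau).$$
   Context: A $d$-dimensional $k$-Fourier-sparse signal is a function $x:\mathbb{R}^d\to\mathbb{C}$ of the form $x(t)=\sum_{i=1}^k v_ie^{2\pi i\langle f_i,t\rangle}$ with $v_i\in\mathbb{C}$, $f_i\in\mathbb{R}^d$. *)

(* Defs.v *)
From HB Require Import structures.
From mathcomp Require Import all_boot all_order all_algebra.
From mathcomp Require Import complex.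
From mathcomp Require Import reals exp trigo.
Set Implicit Arguments. Unset Strict Implicit. Unset Printing Implicit Defensive.
Import Order.TTheory GRing.Theory Num.Theory.
Local Open Scope ring_scope.
Local Open Scope complex_scope.

Definition expi (R : realType) (theta : R) : R[i] := (cos theta +i* sin theta).

Definition dotR (R : realType) (d : nat) (u v : 'rV[R]_d) : R :=
  \sum_(l < d) u 0 l * v 0 l.

Definition fsignal (R : realType) (d k : nat) (v : 'I_k -> R[i])
  (f : 'I_k -> 'rV[R]_d) (t : 'rV[R]_d) : R[i] :=
  \sum_(i < k) v i * expi (2 * pi * dotR (f i) t).

Definition k_Fourier_sparse (R : realType) (d k : nat) (x : 'rV[R]_d -> R[i]) : Prop :=
  exists (v : 'I_k -> R[i]) (f : 'I_k -> 'rV[R]_d), x = fsignal v f.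

(* Main.v *)
Require Import Defs.
From HB Require Import structures.
From mathcomp Require Import all_boot all_order all_algebra.
From mathcomp Require Import complex.
From mathcomp Require Import reals exp trigo.
From mathcomp Require Import ring lra zify.
Import Order.TTheory GRing.Theory Num.Theory.
Local Open Scope ring_scope.
Local Open Scope complex_scope.

Section S.
Variable R : realType.
Local Notation C := R[i].

Lemma expiD (a b : R) : expi (a + b) = expi a * expi b.
Proof. by rewrite /expi cosD sinD; simpc; congr (_ +i* _); ring. Qed.

Lemma expi0 : expi (0:R) = 1.
Proof. by rewrite /expi cos0 sin0. Qed.

Lemma expiMn (a : R) n : expi (a *+ n) = expi a ^+ n.
Proof. elim: n => [|n IH]; first by rewrite mulr0n expi0.
by rewrite mulrS expiD IH exprS. Qed.

Lemma norm_expi (a : R) : `|expi a| = 1.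
Proof. by rewrite /expi normc_def /= cos2Dsin2 sqrtr1. Qed.

Lemma cos_lt1 (t : R) : 0 < t < pi *+ 2 -> cos t < 1.
Proof.
move=> /andP[t0 t2].
have cosmono := ltr_cos.
case: (lerP t pi) => tpi.
  rewrite -cos0; rewrite cosmono // ?in_itv /= ?lexx ?pi_ge0 ?tpi ?(ltW t0) //.
have -> : cos t = cos (pi *+ 2 - t).
  by rewrite addrC cosD2pi cosN.
rewrite -cos0 cosmono ?in_itv /= ?lexx ?pi_ge0 //; last first.
  apply/andP; split; rewrite mulr2n; lra.
rewrite mulr2n; lra.
Qed.

Definition om (N : nat) : C := expi ((pi *+ 2) / N%:R).

Lemma omN N : (0 < N)%N -> om N ^+ N = 1.
Proof.
move=> N0; rewrite /om -expiMn -[(_ / _) *+ N]mulr_natr mulfVK ?pnatr_eq0 -?lt0n //.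
by rewrite /expi cos2pi sin2pi.
Qed.

Lemma om_neq1 N e : (0 < N)%N -> (e %% N != 0)%N -> om N ^+ e != 1.
Proof.
move=> N0 eN.
rewrite (divn_eq e N) exprD mulnC exprM omN // expr1n mul1r.
have r0 : (0 < e %% N)%N by rewrite lt0n.
have rN : (e %% N < N)%N by rewrite ltn_mod.
rewrite /om -expiMn /expi; apply/negP => /eqP [] + _.
apply/eqP; rewrite lt_eqF // cos_lt1 //.
have Npos : (0:R) < N%:R by rewrite ltr0n.
have pp := pi_gt0 R.
apply/andP; split.
  rewrite -[X in _ < X]mulr_natr; apply: mulr_gt0; last by rewrite ltr0n.
  by apply: divr_gt0 => //; rewrite mulr2n; lra.
rewrite -[X in X < _]mulr_natr mulrAC ltr_pdivrMr // ltr_pM2l ?ltr_nat //.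
by rewrite mulr2n; lra.
Qed.

Lemma geo_sum (q : C) N : q ^+ N = 1 -> q != 1 -> \sum_(l < N) q ^+ l = 0.
Proof.
move=> qN q1; have : (q - 1) * \sum_(l < N) q ^+ l = 0 by rewrite -subrX1 qN subrr.
by move/eqP; rewrite mulf_eq0 subr_eq0 (negbTE q1) /= => /eqP.
Qed.

Lemma dft_bound (p : {poly C}) N (B : C) : (0 < N)%N -> (size p <= N)%N ->
  (forall l : 'I_N, `|p.[om N ^+ l]| <= B) -> forall j, (j < N)%N -> `|p`_j| <= B.
Proof.
move=> N0 sp HB j jN.
have key : \sum_(l < N) p.[om N ^+ l] * (om N ^+ l) ^+ (N - j) = N%:R * p`_j.
  under eq_bigr do rewrite (horner_coef_wide _ sp) mulr_suml.
  rewrite exchange_big /=.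
  under eq_bigr => i _.
    under eq_bigr => l _ do rewrite -mulrA -exprD -exprM mulnC exprM.
    rewrite -mulr_sumr.
  over.
  rewrite (bigD1 (Ordinal jN)) //= [X in _ + X]big1 ?addr0.
    rewrite subnKC ?(ltnW jN) // omN // (eq_bigr (fun _ => 1)); last by move=> l _; rewrite expr1n.
    by rewrite sumr_const card_ord mulrC.
  move=> i ij; rewrite geo_sum ?mulr0 //.
    by rewrite -exprM mulnC exprM omN // expr1n.
  apply: om_neq1 => //.
  have iN := ltn_ord i.
  have ij' : (nat_of_ord i != j).
    by apply/eqP => E; move: ij; rewrite -val_eqE /= E eqxx.
  move: ij'; case: (ltngtP i j) => // H _.
    rewrite addnBA ?(ltnW jN) // modn_small; lia.
  rewrite addnBA ?(ltnW jN) // -addnBAC ?(ltnW H) // -modnDmr modnn addn0 modn_small; lia.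
have Npos : (0:C) < N%:R by rewrite ltr0n.
rewrite -(ler_pM2l Npos) -[X in X * `|p`_j|]normr_nat -normrM -key.
apply: le_trans (ler_norm_sum _ _ _) _.
have -> : N%:R * B = \sum_(l < N) B by rewrite sumr_const card_ord mulr_natl.
apply: ler_sum => l _.
by rewrite normrM normrX normrX norm_expi !expr1n mulr1.
Qed.

Lemma H1 (u : C) (a : R) : `|u| = 1 -> 0 <= a < 1 ->
  `|1 - u| <= (2 / (1 + a))%:C * `|1 - a%:C * u|.
Proof.
case: u => x y; rewrite !normc_def /= => /(congr1 (@complex.Re R)) /= h /andP[a0 a1].
have hxy : x ^+ 2 + y ^+ 2 = 1.
  by rewrite -[LHS]sqr_sqrtr ?h ?expr1n // addr_ge0 // sqr_ge0.
rewrite -rmorphM lecR /=.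
have r0 : 0 <= 2 / (1 + a) by apply: divr_ge0; lra.
rewrite -[X in X * _](ger0_norm r0) -sqrtr_sqr -sqrtrM ?sqr_ge0 //.
rewrite ler_sqrt; last first.
  apply: mulr_ge0; first exact: sqr_ge0.
  by apply: addr_ge0; apply: sqr_ge0.
rewrite !mul0r !subr0 !addr0 sub0r sqrrN.
have ha : 0 < 1 + a by lra.
rewrite expr_div_n mulrAC ler_pdivlMr ?exprn_gt0 //.
have hx : -1 <= x by nra.
have : 0 <= (1 - a) ^+ 2 * (1 + x) by apply: mulr_ge0; [apply: sqr_ge0 | lra].
nra.
Qed.

Lemma s_bound (u : C) (a : R) D : `|u| = 1 -> 0 <= a < 1 ->
  `|(1 - u) * \sum_(n < D) (a%:C * u) ^+ n| <= ((2 / (1 + a)) * (1 + a ^+ D))%:C.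
Proof.
move=> u1 ha; have h1 := @H1 u a u1 ha.
have H2 : (1 - a%:C * u) * \sum_(n < D) (a%:C * u) ^+ n = 1 - (a%:C * u) ^+ D.
  by rewrite -[1 - _]opprB mulNr -subrX1 opprB.
have na : `|a%:C| = a%:C by rewrite ger0_norm // ler0c; case/andP: ha.
have H3 : `|1 - (a%:C * u) ^+ D| <= (1 + a ^+ D)%:C.
  apply: le_trans (ler_normB _ _) _.
  by rewrite normr1 normrX normrM na u1 mulr1 rmorphD rmorph1 rmorphXn.
rewrite normrM rmorphM /=.
apply: le_trans (ler_wpM2r (normr_ge0 _) h1) _.
rewrite -mulrA -normrM H2 ler_wpM2l //.
rewrite ler0c; apply: divr_ge0 => //; case/andP: ha => ? ?; lra.
Qed.

Definition sp (a : R) (D : nat) (c : C) : {poly C} :=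
  (1 - c *: 'X) * \poly_(n < D) ((a%:C * c) ^+ n).

Lemma sp_horner a D c z :
  (sp a D c).[z] = (1 - c * z) * \sum_(n < D) (a%:C * (c * z)) ^+ n.
Proof.
rewrite /sp hornerM horner_poly !hornerE; congr (_ * _).
by apply: eq_bigr => n _; rewrite -exprMn. 
Qed.

Lemma sp_size a D c : (size (sp a D c) <= D.+1)%N.
Proof.
rewrite /sp; apply: leq_trans (size_polyMleq _ _) _.
have h1 : (size (1 - c *: 'X : {poly C})%R <= 2)%N.
  apply: leq_trans (size_polyD _ _) _; rewrite size_poly1 size_polyN.
  by rewrite geq_max /= (leq_trans (size_scale_leq _ _)) // size_polyX.
have h2 := size_poly D (fun n => (a%:C * c) ^+ n).
move: (leq_add h1 h2); case: (_ + _)%N => [|n] //=; by rewrite add2n ltnS.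
Qed.

Lemma size_prod_le D k (F : 'I_k -> {poly C}) :
  (forall i, (size (F i) <= D.+1)%N) -> (size (\prod_(i < k) F i)%R <= k * D + 1)%N.
Proof.
elim: k F => [|k IH] F hF; first by rewrite big_ord0 size_poly1.
rewrite big_ord_recr /=; apply: leq_trans (size_polyMleq _ _) _.
have := IH (fun i => F (widen_ord (leqnSn k) i)) (fun i => hF _).
have := hF ord_max.
move=> h1 h2; move: (leq_add h2 h1); case: (_ + _)%N => [|n] //=.
rewrite mulSn; lia.
Qed.

Lemma sp0 a D c : (0 < D)%N -> (sp a D c).[0] = 1.
Proof.
move=> D0; rewrite sp_horner !mulr0 subr0 mul1r.
case: D D0 => // D _; rewrite big_ord_recl expr0 big1 ?addr0 // => i _.
by rewrite exprS mul0r.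
Qed.


Lemma poly_interp (k D : nat) (a : R) (th : 'I_k -> R) : (0 < D)%N -> 0 <= a < 1 ->
  exists Cf : 'I_(k * D) -> C,
   (forall j, `|Cf j| <= (((2 / (1 + a)) * (1 + a ^+ D)) ^+ k)%:C) /\
   (forall i, \sum_(j < k * D) Cf j * expi (th i) ^+ j.+1 = 1).
Proof.
move=> D0 ha.
set m := (k * D)%N.
set P := \prod_(i < k) sp a D (expi (- th i)).
exists (fun j => - P`_(j.+1)).
have sz : (size P <= m.+1)%N.
  by rewrite -addn1; apply: size_prod_le => i; apply: sp_size.
have P0 : P`_0 = 1.
  by rewrite -horner_coef0 horner_prod big1 // => i _; rewrite sp0.
have id : forall z, \sum_(j < m) (- P`_(j.+1)) * z ^+ j.+1 = 1 - P.[z].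
  move=> z; rewrite (horner_coef_wide z sz) big_ord_recl /= P0 expr0 mulr1.
  by rewrite opprD addrA subrr add0r -sumrN; apply: eq_bigr => j _; rewrite mulNr.
split.
  move=> j; rewrite normrN.
  apply: (@dft_bound P m.+1) => //; last by rewrite ltnS.
  move=> l; rewrite horner_prod normr_prod.
  rewrite rmorphXn /= -[X in _ <= _ ^+ X](card_ord k) -prodr_const.
  apply: ler_prod => i _; rewrite normr_ge0 /= sp_horner.
  apply: s_bound => //.
  by rewrite normrM normrX !norm_expi expr1n mulr1.
move=> i; rewrite id horner_prod (bigD1 i) //= sp_horner -expiD addNr expi0.
by rewrite mulr1 subrr !mul0r subr0.
Qed.

End S.

Section N.
Variable R : realType.

Lemma bern (x : R) n : -1 <= x -> 1 + x *+ n <= (1 + x) ^+ n.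
Proof.
move=> hx; elim: n => [|n IH]; first by rewrite mulr0n expr0 addr0.
rewrite exprSr mulrSr.
have h0 : 0 <= 1 + x by lra.
apply: le_trans (ler_wpM2r h0 IH).
have : 0 <= x *+ n * x.
  rewrite -mulr_natl -mulrA mulr_ge0 //; exact: sqr_ge0.
nra.
Qed.

Lemma inv_le2 (x : R) : 1 / 2 <= x -> x^-1 <= 2.
Proof.
move=> hx; have x0 : 0 < x by lra.
rewrite -[x^-1]mul1r ler_pdivrMr //; lra.
Qed.

Lemma numeric (k L : nat) (a : R) : (1 <= k)%N -> (2 * k <= 2 ^ L)%N ->
  a = k%:R / (k%:R + 1) ->
  ((2 / (1 + a)) * (1 + a ^+ (k * L))) ^+ k <= 11.
Proof.
move=> k1 kL ha.
set K : R := k%:R.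
have K1 : 1 <= K by rewrite /K ler1n.
have K0 : 0 < K by lra.
have nK : forall x : R, x *+ k = x * K by move=> x; rewrite /K mulr_natr.
set y : R := 1 / (2 * K + 2).
have ry : 2 / (1 + a) = (1 - y)^-1.
  rewrite ha /y; field; rewrite -/K; apply/and3P; split; apply/negP => /eqP; lra.
have A : (2 / (1 + a)) ^+ k <= 2.
  rewrite ry exprVn; apply: inv_le2.
  have y0 : -1 <= - y by rewrite /y; apply: (le_trans _ (_ : -(1/2) <= _)); [lra|rewrite lerN2 ler_pdivrMr; lra].
  apply: le_trans (bern (-y) k y0).
  rewrite mulNrn nK /y.
  have : K / (2 * K + 2) <= 1/2.
    by rewrite ler_pdivrMr ?ler_pdivlMr; lra.
  rewrite -mulrA mul1r; lra.
have aK : a = (1 + 1 / K)^-1.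
  by rewrite ha; field; apply/andP; split; lra.
have B1 : 2 <= (1 + 1 / K) ^+ k.
  have h : -1 <= 1 / K.
    have : 0 <= 1 / K by apply: divr_ge0; lra.
    lra.
  apply: le_trans (bern (1/K) k h).
  by rewrite nK mulrAC mul1r divff; lra.
have B2 : 2 * K <= (1 + 1 / K) ^+ (k * L).
  rewrite exprM.
  apply: (@le_trans _ _ (2 ^+ L)).
    by rewrite /K -natrX -natrM ler_nat.
  by apply: lerXn2r => //; rewrite nnegrE; lra.
have B : a ^+ (k * L) <= 1 / (2 * K).
  rewrite aK exprVn [X in _ <= X]div1r lef_pV2 // ?posrE; try lra.
set x : R := 1 / (2 * K).
have x0 : 0 <= x by rewrite /x divr_ge0; lra.
have x1 : x <= 1 / 2 by rewrite /x ler_pdivrMr ?ler_pdivlMr; lra.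
have Cc : (1 + a ^+ (k * L)) ^+ k <= 2.
  apply: (@le_trans _ _ ((1 + x) ^+ k)).
    have aD0 : 0 <= a ^+ (k * L).
      by apply: exprn_ge0; rewrite ha; apply: divr_ge0; rewrite -/K; lra.
    have Bx : a ^+ (k * L) <= x := B.
    apply: lerXn2r; rewrite ?nnegrE; lra.
  have hmx : -1 <= - x by lra.
  have b := bern (-x) k hmx.
  have e : 1 + (- x) *+ k = 1 / 2.
    by rewrite mulNrn nK /x; field; lra.
  have p1 : (1 + x) ^+ k * (1 + - x) ^+ k <= 1.
    rewrite -exprMn; apply: exprn_ile1; nra.
  have q0 : 0 < (1 + - x) ^+ k by apply: exprn_gt0; lra.
  rewrite -(ler_pM2r q0); apply: le_trans p1 _.
  rewrite e in b; nra.
rewrite exprMn.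
have g0 : 0 <= (2 / (1 + a)) ^+ k.
  apply: exprn_ge0; apply: divr_ge0 => //.
  have : 0 <= K / (K+1) by apply: divr_ge0; lra.
  rewrite ha; lra.
have : (2 / (1 + a)) ^+ k * (1 + a ^+ (k * L)) ^+ k <= 2 * 2.
  apply: le_trans (ler_wpM2l g0 Cc) _; apply: ler_wpM2r; lra.
lra.
Qed.
End N.

Lemma dotR_shift (R : realType) d (f t0 tau : 'rV[R]_d) n :
  dotR f (t0 + n%:R *: tau) = dotR f t0 + dotR f tau *+ n.
Proof.
rewrite /dotR -sumrMnl -big_split; apply: eq_bigr => l _.
by rewrite !mxE mulrDr mulrCA mulr_natl.
Qed.

Lemma fsignal_shift (R : realType) d k (v : 'I_k -> R[i]) (f : 'I_k -> 'rV[R]_d)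
  (t0 tau : 'rV[R]_d) n :
  fsignal v f (t0 + n%:R *: tau) =
  \sum_(i < k) (v i * expi (2 * pi * dotR (f i) t0)) * expi (2 * pi * dotR (f i) tau) ^+ n.
Proof.
rewrite /fsignal; apply: eq_bigr => i _.
by rewrite dotR_shift mulrDr expiD [2 * pi * (_ *+ n)]mulrnAr expiMn mulrA.
Qed.

Theorem lemma5p4 (R : realType) :
  exists c : R, 0 < c /\
  forall k d : nat, exists m : nat,
    (m%:R <= c * ((k%:R) ^+ 2 * ln (k%:R + 1)) :> R) /\
    forall (x : 'rV[R]_d -> R[i]), k_Fourier_sparse k x ->
    forall t0 tau : 'rV[R]_d,
      (forall l, 0 <= t0 0 l) -> (forall l, 0 < tau 0 l) ->
      exists C : 'I_m -> R[i],
        (forall j, `|C j| <= 11) /\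
        x t0 = \sum_(j < m) C j * x (t0 + (j.+1)%:R *: tau).
Proof.
have ln2 : (0 : R) < ln 2 by apply: ln_gt0; lra.
exists (3 / ln 2); split; first by apply: divr_gt0 => //; lra.
move=> k d.
exists (k * (k * (trunc_log 2 k + 2)))%N; split.
  case: k => [|k].
    by rewrite mul0n expr0n /= mul0r mulr0.
  set L := (trunc_log 2 k.+1 + 2)%N.
  have kpos : (0 < k.+1)%N by [].
  have h1 := trunc_logP (isT : (1 < 2)%N) kpos.
  have hL : (2 ^ L <= (k.+1 + 1) ^ 3)%N.
    rewrite /L expnD; nia.
  have hLR : (2 : R) ^+ L <= (k.+1%:R + 1) ^+ 3.
    by rewrite -[2 : R]/(2%:R) -natrX -[1 : R]/(1%:R) -natrD -natrX ler_nat.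
  have hln : ln (2 : R) *+ L <= ln (k.+1%:R + 1 : R) *+ 3.
    rewrite -!lnXn //; last by rewrite ltr_wpDl.
    rewrite ler_ln // posrE; first exact: exprn_gt0.
    by apply: exprn_gt0; rewrite ltr_wpDl.
  rewrite natrM natrM mulrA -expr2.
  rewrite mulrCA ler_pM2l ?exprn_gt0 ?ltr0n //.
  rewrite mulrAC ler_pdivlMr //.
  rewrite -[ln 2 *+ L]mulr_natl -[_ *+ 3]mulr_natl in hln.
  exact: hln.
move=> x [v [f ->]] t0 tau _ _.
case: k v f => [|k] v f.
  exists (fun _ => 0); split; first by move=> [].
  by rewrite big_ord0 /fsignal big_ord0.
set L := (trunc_log 2 k.+1 + 2)%N.
set a : R := k.+1%:R / (k.+1%:R + 1).
have ha : 0 <= a < 1.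
  have k0 : (0 : R) < k.+1%:R by rewrite ltr0n.
  apply/andP; split; first by rewrite /a divr_ge0 //; lra.
  by rewrite /a ltr_pdivrMr; lra.
have D0 : (0 < k.+1 * L)%N by rewrite muln_gt0 /L addn2.
have [Cf [Cb Ce]] := @poly_interp R k.+1 (k.+1 * L) a
  (fun i => 2 * pi * dotR (f i) tau) D0 ha.
exists Cf; split.
  move=> j; apply: le_trans (Cb j) _.
  have e11 : ((11 : R)%:C : R[i]) = 11 by rewrite rmorph_nat.
  rewrite -e11 lecR.
  apply: numeric => //.
  have h2 := trunc_log_ltn k.+1 (isT : (1 < 2)%N).
  rewrite /L addn2 expnS; lia.
rewrite (eq_bigr (fun j => Cf j * \sum_(i < k.+1) (v i * expi (2 * pi * dotR (f i) t0)) *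
    expi (2 * pi * dotR (f i) tau) ^+ j.+1)); last by move=> j _; rewrite fsignal_shift.
under eq_bigr do rewrite mulr_sumr.
rewrite exchange_big /= /fsignal; apply: eq_bigr => i _.
rewrite -[LHS]mulr1 -(Ce i) mulr_sumr; apply: eq_bigr => j _.
by rewrite mulrCA.
Qed.
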